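(* Let $(V,e)$ be a unital $\ast$-normed space and $S_2=V_{he}^\ast\cap2\operatorname{ball}V^\ast$. Then $\operatorname{ball}V$ is equivalent to $S_2^\circ$, i.e. $rS_2^\circ\subseteq\operatorname{ball}V\subseteq RS_2^\circ$ for some $r,R>0$.
   Context: A $\ast$-normed space is a complex vector space with involution and norm satisfying $\|v^\ast\|=\|v\|$; $V^\ast$ has involution $\langle v,\varphi^\ast\rangle=\overline{\langle v^\ast,\varphi\rangle}$, $V_h^\ast$ is the set of hermitian bounded functionals, and for nonzero hermitian $e$, $V_{he}^\ast=\{y\in V_h^\ast:\langle e,y\rangle=1\}$. $(V,e)$ is a unital $\ast$-normed space if $V_{he}^\ast\cap\operatorname{ball}V^\ast\ne\varnothing$. For $A\subseteq V^\ast$, $A^\circ=\{v\in V:|\langle v,a\rangle|\le1\ \forall a\in A\}$. *)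

(* Defs.v *)
From HB Require Import structures.
From mathcomp Require Import all_boot all_order all_algebra.
From mathcomp Require Import all_classical all_reals all_analysis.
From mathcomp Require Import complex.
Set Implicit Arguments. Unset Strict Implicit. Unset Printing Implicit Defensive.
Import Order.TTheory GRing.Theory Num.Theory.
Import numFieldNormedType.Exports.
Local Open Scope ring_scope.
Local Open Scope classical_set_scope.

(* A *-normed space is a normed space V over K[i] (norm ||.|| = `|.|,
   valued in K[i] but real nonnegative) with a conjugate-linear
   involution  star  satisfying ||star v|| = ||v||. *)
Definition is_star_normed (K : realType) (V : normedModType K[i])
  (star : V -> V) : Prop :=
  [/\ forall v, star (star v) = v,
      forall u v, star (u + v) = star u + star v,
      forall (a : K[i]) v, star (a *: v) = (conjc a) *: star v
    & forall v, `|star v| = `|v| ].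

Definition bounded_functional (K : realType) (V : normedModType K[i])
  (f : V -> K[i]) : Prop :=
  (forall (a : K[i]) u v, f (a *: u + v) = a * f u + f v) /\
  exists M : K, forall v, `|f v| <= M%:C%C * `|v|.

Definition dual_star (K : realType) (V : normedModType K[i])
  (star : V -> V) (f : V -> K[i]) : V -> K[i] :=
  fun v => conjc (f (star v)).

Definition hermitian_functional (K : realType) (V : normedModType K[i])
  (star : V -> V) (f : V -> K[i]) : Prop :=
  bounded_functional f /\ dual_star star f = f.

Definition Vhe (K : realType) (V : normedModType K[i])
  (star : V -> V) (e : V) : set (V -> K[i]) :=
  [set f | hermitian_functional star f /\ f e = 1].

(* t * ball V^* : functionals with operator norm <= t, i.e.
   sup_{||v||<=1} |f v| <= t, equivalently |f v| <= t ||v|| for all v. *)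
Definition dual_ball (K : realType) (V : normedModType K[i]) (t : K)
  : set (V -> K[i]) :=
  [set f | bounded_functional f /\ forall v, `|f v| <= t%:C%C * `|v|].

Definition unit_ball (K : realType) (V : normedModType K[i]) : set V :=
  [set v | `|v| <= 1].

Definition polar (K : realType) (V : normedModType K[i])
  (A : set (V -> K[i])) : set V :=
  [set v | forall a, A a -> `|a v| <= 1].

Definition scale_set (K : realType) (V : normedModType K[i]) (t : K)
  (A : set V) : set V := [set t%:C%C *: v | v in A].

Definition unital_star_normed (K : realType) (V : normedModType K[i])
  (star : V -> V) (e : V) : Prop :=
  [/\ is_star_normed star, e != 0, star e = e
    & exists y, Vhe star e y /\ @dual_ball K V 1 y].

(* Main.v *)
Require Import Defs.
From HB Require Import structures.
From mathcomp Require Import all_boot all_order all_algebra.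
From mathcomp Require Import all_classical all_reals all_analysis.
From mathcomp Require Import complex.
From mathcomp Require Import ring lra.
Import Order.TTheory GRing.Theory Num.Theory.
Import numFieldNormedType.Exports.
Local Open Scope ring_scope.
Local Open Scope classical_set_scope.
Local Open Scope complex_scope.
Section Aux.
Variable K : realType.
Local Notation C := K[i].

Lemma real_eqC (z : C) : complex.Im z = 0 -> z = (complex.Re z)%:C.
Proof. by case: z => a b /= ->. Qed.

Lemma ge0_realC (z : C) : 0 <= z -> z = (complex.Re z)%:C.
Proof. by move=> /ger0_Im; apply: real_eqC. Qed.

Definition nc (z : C) : K := complex.Re `|z|.
Lemma ncE z : `|z| = (nc z)%:C.
Proof. exact: ge0_realC. Qed.
Lemma nc_ge0 z : 0 <= nc z.
Proof. by have := normr_ge0 z; rewrite lecE => /andP[]. Qed.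
Lemma ncM x y : nc (x * y) = nc x * nc y.
Proof. have := normrM x y; rewrite !ncE -rmorphM. by case. Qed.
Lemma ncD x y : nc (x + y) <= nc x + nc y.
Proof. by rewrite -lecR rmorphD -!ncE ler_normD. Qed.
Lemma ncR (t : K) : nc t%:C = `|t|.
Proof. rewrite /nc normc_def /= expr0n addr0 /= sqrtr_sqr //. Qed.
Lemma ncJ z : nc (conjc z) = nc z.
Proof. case: z => a b; rewrite /nc !normc_def /= sqrrN //. Qed.
Lemma Re_le_nc z : complex.Re z <= nc z.
Proof.
case: z => a b; rewrite /nc normc_def /=.
apply: (le_trans (ler_norm a)). by rewrite -sqrtr_sqr ler_sqrt ?addr_ge0 ?sqr_ge0 // lerDl sqr_ge0.
Qed.
Lemma Im_le_nc z : `|complex.Im z| <= nc z.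
Proof.
case: z => a b; rewrite /nc normc_def /=.
by rewrite -sqrtr_sqr ler_sqrt ?addr_ge0 ?sqr_ge0 // lerDr sqr_ge0.
Qed.
Lemma Re_abs_le_nc z : `|complex.Re z| <= nc z.
Proof.
case: z => a b; rewrite /nc normc_def /=.
by rewrite -sqrtr_sqr ler_sqrt ?addr_ge0 ?sqr_ge0 // lerDl sqr_ge0.
Qed.

Variable V : normedModType C.

Definition nv (v : V) : K := complex.Re `|v|.
Lemma nvE v : `|v| = (nv v)%:C.
Proof. exact: ge0_realC. Qed.
Lemma nv_ge0 v : 0 <= nv v.
Proof. by have := normr_ge0 v; rewrite lecE => /andP[]. Qed.
Lemma nvD x y : nv (x + y) <= nv x + nv y.
Proof. have := ler_normD x y; rewrite !nvE -rmorphD lecR. done. Qed.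
Lemma nvZ a x : nv (a *: x) = nc a * nv x.
Proof. have := normrZ a x; rewrite !nvE ncE -rmorphM. by case. Qed.
Lemma nvR (t : K) x : nv (t%:C *: x) = `|t| * nv x.
Proof. by rewrite nvZ ncR. Qed.
Lemma nvN x : nv (- x) = nv x.
Proof. by rewrite /nv normrN. Qed.
Lemma nv0 : nv 0 = 0.
Proof. by rewrite /nv normr0. Qed.

Definition rlin (g : V -> K) := forall (t : K) x y, g (t%:C *: x + y) = t * g x + g y.


Definition cond (A : set (V * K)) :=
  [/\ A (0, 0), (forall x a b, A (x,a) -> A (x,b) -> a = b),
      (forall t x y a b, A (x,a) -> A (y,b) -> A (t%:C *: x + y, t * a + b))
    & (forall x a, A (x,a) -> a <= nv x)].

Lemma ext_step A w : cond A -> ~ (exists a, A (w,a)) ->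
  exists B, A `<` B /\ cond B.
Proof.
move=> [A0 Afun Alin Adom] nw.
have Aadd x y a b : A (x,a) -> A (y,b) -> A (x + y, a + b).
  by move=> h1 h2; have := Alin 1 x y a b h1 h2; rewrite rmorph1 scale1r mul1r.
have Ascl t x a : A (x,a) -> A (t%:C *: x, t * a).
  by move=> h; have := Alin t x 0 a 0 h A0; rewrite !addr0.
pose S := [set z | exists x a, A (x,a) /\ z = a - nv (x - w)].
have Sub y b : A (y,b) -> ubound S (nv (y + w) - b).
  move=> Ayb _ [x [a [Axa ->]]].
  have h1 := Adom _ _ (Aadd _ _ _ _ Axa Ayb).
  have h2 : nv (x + y) <= nv (x - w) + nv (y + w).
    by have := nvD (x - w) (y + w); rewrite addrA addrAC subrK.
  lra.
have S0 : S !=set0 by exists (0 - nv (0 - w)), 0, 0.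
pose c := sup S.
have Sc z : S z -> z <= c.
  by apply: sup_upper_bound; split => //; exists (nv (0 + w) - 0); exact: Sub.
have cS y b : A (y,b) -> c <= nv (y + w) - b.
  by move=> h; apply: ge_sup => //; exact: Sub.
pose B := [set p | exists x a t, A (x,a) /\ p = (x + t%:C *: w, a + t * c)].
exists B; split.
  split.
    move=> [x a] Axa; exists x, a, 0; split => //.
    by rewrite rmorph0 scale0r mul0r !addr0.
  move=> BA; apply: nw; exists c; apply: BA; exists 0, 0, 1; split => //.
  by rewrite add0r rmorph1 scale1r mul1r add0r.
split.
- by exists 0, 0, 0; split => //; rewrite rmorph0 scale0r mul0r !addr0.
- move=> x' a1 a2 [x [a [t [Axa E1]]]] [y [b [s [Ayb E2]]]].
  case: E1 => Ex' Ea1; rewrite Ex' in E2; case: E2 => Exy Ea2.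
  rewrite Ea1 Ea2.
  have [ts|nts] := eqVneq t s.
    rewrite ts in Exy *; move/addIr: Exy => exy; rewrite exy in Axa.
    by rewrite (Afun _ _ _ Axa Ayb).
  exfalso; apply: nw.
  have h : A (y - x, b - a).
    have := Aadd _ _ _ _ Ayb (Ascl (-1) _ _ Axa).
    by rewrite rmorphN rmorph1 !scaleN1r mulN1r.
  exists ((t - s)^-1 * (b - a)).
  have -> : w = ((t - s)^-1)%:C *: (y - x).
    have e : (t - s)%:C *: w = y - x.
      rewrite rmorphB scalerBl; apply/eqP; rewrite subr_eq addrAC -Exy.
      by rewrite [x + _]addrC addrK.
    rewrite -e scalerA -rmorphM mulVf ?subr_eq0 //.
    by rewrite rmorph1 scale1r.
  exact: Ascl.
- move=> r x' y' a' b' [x [a [t [Axa E1]]]] [y [b [s [Ayb E2]]]].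
  case: E1 => -> ->; case: E2 => -> ->.
  exists (r%:C *: x + y), (r * a + b), (r * t + s); split; first exact: Alin.
  congr pair; last by rewrite mulrDr mulrDl mulrA; lra.
  rewrite rmorphD rmorphM scalerDl -scalerA scalerDr.
  by rewrite addrACA.
- move=> x' a' [x [a [t [Axa E]]]]; case: E => -> ->.
  case: (ltgtP t 0) => [tlt0|tgt0|->]; last first.
  + by rewrite rmorph0 scale0r mul0r !addr0; exact: Adom.
  + have tn0 : t != 0 by rewrite gt_eqF.
    have H := cS _ _ (Ascl (t^-1) _ _ Axa).
    have E : x + t%:C *: w = t%:C *: ((t^-1)%:C *: x + w).
      by rewrite scalerDr scalerA -rmorphM mulfV // rmorph1 scale1r.
    rewrite E nvR gtr0_norm //.
    have := ler_wpM2l (ltW tgt0) H; rewrite mulrBr mulVKf //.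
    lra.
  + set s := - t.
    have sgt0 : 0 < s by rewrite /s oppr_gt0.
    have sn0 : s != 0 by rewrite gt_eqF.
    have H := Sc _ (ex_intro _ _ (ex_intro _ _ (conj (Ascl (s^-1) _ _ Axa) erefl))).
    have E : x + t%:C *: w = s%:C *: ((s^-1)%:C *: x - w).
      rewrite scalerBr scalerA -rmorphM mulfV // rmorph1 scale1r.
      by rewrite /s rmorphN scaleNr opprK.
    rewrite E nvR gtr0_norm //.
    have := ler_wpM2l (ltW sgt0) H; rewrite mulrBr mulVKf //.
    rewrite /s; lra.
Qed.


Lemma cond_line v0 : cond [set p | exists t : K, p = (t%:C *: v0, t * nv v0)].
Proof.
split.
- by exists 0; rewrite rmorph0 scale0r mul0r.
- move=> x a b [t E1] [s E2]; case: E1 => Ex Ea; rewrite Ex in E2; case: E2 => E3 Eb.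
  rewrite Ea Eb.
  have [->|v0n] := eqVneq v0 0; first by rewrite nv0 !mulr0.
  have : (t - s)%:C *: v0 == 0 by rewrite rmorphB scalerBl E3 subrr.
  rewrite scaler_eq0 (negbTE v0n) orbF => /eqP h.
  have : t - s = 0 by case: h.
  by move/eqP; rewrite subr_eq0 => /eqP ->.
- move=> r x y a b [t E1] [s E2]; case: E1 => -> ->; case: E2 => -> ->.
  exists (r * t + s); congr pair; last by rewrite mulrDl mulrA.
  by rewrite rmorphD rmorphM scalerDl scalerA.
- move=> x a [t E]; case: E => -> ->; rewrite nvR.
  by apply: ler_wpM2r; [exact: nv_ge0|exact: ler_norm].
Qed.

Lemma hb_real v0 : exists g : V -> K, rlin g /\ (forall v, g v <= nv v) /\ g v0 = nv v0.
Proof.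
pose good (A : set (V * K)) := A = set0 \/ (cond A /\ A (v0, nv v0)).
have [A [gA maxA]] : exists A, good A /\ forall B, A `<` B -> ~ good B.
  apply: Zorn_bigcup => F FP Ftot.
  have condX X p : F X -> X p -> cond X /\ X (v0, nv v0).
    move=> FX Xp; case: (FP X FX) => // X0; by rewrite X0 in Xp.
  case: (pselect (exists p, (\bigcup_(X in F) X) p)) => [[p [X0 FX0 X0p]]|nex]; last first.
    left; apply/seteqP; split => [p Up|//]; by apply: nex; exists p.
  right.
  have [[c00 cfun clin cdom] cv0] := condX _ _ FX0 X0p.
  have two X1 X2 p1 p2 : F X1 -> F X2 -> X1 p1 -> X2 p2 ->
      exists Z, [/\ F Z, Z p1 & Z p2].
    move=> F1 F2 h1 h2; case: (Ftot X1 X2 F1 F2) => sub.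
      by exists X2; split => //; exact: sub.
    by exists X1; split => //; exact: sub.
  split; last by exists X0.
  split.
  - by exists X0.
  - move=> x a b [X1 F1 h1] [X2 F2 h2].
    have [Z [FZ Z1 Z2]] := two _ _ _ _ F1 F2 h1 h2.
    have [[_ zfun _ _] _] := condX _ _ FZ Z1.
    exact: zfun Z1 Z2.
  - move=> t x y a b [X1 F1 h1] [X2 F2 h2].
    have [Z [FZ Z1 Z2]] := two _ _ _ _ F1 F2 h1 h2.
    have [[_ _ zlin _] _] := condX _ _ FZ Z1.
    by exists Z => //; exact: zlin.
  - move=> x a [X1 F1 h1].
    have [[_ _ _ zdom] _] := condX _ _ F1 h1.
    exact: zdom.
pose B0 := [set p | exists t : K, p = (t%:C *: v0, t * nv v0)].
have [cA Av0] : cond A /\ A (v0, nv v0).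
  case: gA => // A0; exfalso; apply: (maxA B0).
    rewrite A0; split => // sub.
    have h0 : B0 (0,0) by exists 0; rewrite rmorph0 scale0r mul0r.
    by have := sub (0,0) h0.
  right; split; first exact: cond_line.
  by exists 1; rewrite rmorph1 scale1r mul1r.
have tot x : exists a, A (x,a).
  case: (pselect (exists a, A (x,a))) => // nx.
  have [B [AB cB]] := @ext_step A x cA nx.
  exfalso; apply: (maxA B AB); right; split => //.
  by apply: AB.1.
have [g Hg] := choice tot.
case: cA => A0 Afun Alin Adom.
exists g; split; last split.
- move=> t x y; apply: (Afun _ _ _ (Hg _)).
  exact: Alin.
- by move=> v; exact: Adom.
- exact: (Afun _ _ _ (Hg _)).
Qed.


Definition clin (f : V -> C) := forall (a : C) u v, f (a *: u + v) = a * f u + f v.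

Lemma clin0 f : clin f -> f 0 = 0.
Proof. move=> h; have e := h 1 0 0; rewrite scaler0 addr0 mul1r in e.
by have := congr1 (fun z => z - f 0) e; rewrite /= subrr addrK. Qed.
Lemma clinZ f a u : clin f -> f (a *: u) = a * f u.
Proof. by move=> h; have := h a u 0; rewrite addr0 clin0 // addr0. Qed.
Lemma clinD f u v : clin f -> f (u + v) = f u + f v.
Proof. by move=> h; have := h 1 u v; rewrite scale1r mul1r. Qed.

Lemma rlin0 g : rlin g -> g 0 = 0.
Proof. move=> h; have e := h 1 0 0; rewrite scaler0 addr0 mul1r in e.
by have := congr1 (fun z => z - g 0) e; rewrite /= subrr addrK. Qed.
Lemma rlinZ g t u : rlin g -> g (t%:C *: u) = t * g u.
Proof. by move=> h; have := h t u 0; rewrite addr0 rlin0 // addr0. Qed.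
Lemma rlinD g u v : rlin g -> g (u + v) = g u + g v.
Proof. by move=> h; have := h 1 u v; rewrite rmorph1 scale1r mul1r. Qed.

Definition cplx (g : V -> K) (v : V) : C := (g v)%:C - 'i * (g ('i *: v))%:C.

Lemma cplx_lin g : rlin g -> clin (cplx g).
Proof.
move=> hg a u w.
have ea : a *: u = (complex.Re a)%:C *: u + (complex.Im a)%:C *: ('i *: u).
  by rewrite scalerA -scalerDl mulrC -complexE.
have ii : 'i *: ('i *: u) = - u.
  by rewrite scalerA -expr2 sqr_i scaleN1r.
have eia : 'i *: (a *: u) = (- complex.Im a)%:C *: u + (complex.Re a)%:C *: ('i *: u).
  have t1 : 'i *: ((complex.Im a)%:C *: ('i *: u)) = (- complex.Im a)%:C *: u.
    by rewrite !scalerA mulrAC -expr2 sqr_i mulN1r rmorphN.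
  have t2 : 'i *: ((complex.Re a)%:C *: u) = (complex.Re a)%:C *: ('i *: u).
    by rewrite !scalerA mulrC.
  by rewrite ea scalerDr t1 t2 addrC.
rewrite /cplx scalerDr eia ea !rlinD // !rlinZ //.
rewrite [a in RHS]complexE.
set p := complex.Re a; set q := complex.Im a.
set x1 := g u; set x2 := g ('i *: u); set x3 := g w; set x4 := g ('i *: w).
apply/eqP; rewrite eq_complex /=; apply/andP; split; apply/eqP; ring.
Qed.


Lemma cplx_Re g v : complex.Re (cplx g v) = g v.
Proof. rewrite /cplx /=; ring. Qed.

Lemma Re_Jz (z : C) : complex.Re (conjc z * z) = nc z ^+ 2.
Proof.
rewrite /nc normc_def; case: z => a b /=.
rewrite sqr_sqrtr ?addr_ge0 ?sqr_ge0 //; ring.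
Qed.

Lemma cplx_bound g : rlin g -> (forall v, g v <= nv v) -> forall v, nc (cplx g v) <= nv v.
Proof.
move=> hl hb v; set z := cplx g v.
have h : g (conjc z *: v) = nc z ^+ 2.
  by rewrite -cplx_Re clinZ; [rewrite Re_Jz | exact: cplx_lin].
have := hb (conjc z *: v); rewrite h nvZ ncJ expr2.
have [z0|zp] := eqVneq (nc z) 0; first by rewrite z0 nv_ge0.
have zp' : 0 < nc z by rewrite lt0r zp nc_ge0.
by rewrite ler_pM2l.
Qed.


Section Herm.
Variable star : V -> V.
Hypothesis hs : is_star_normed star.

Definition herm (f : V -> C) (v : V) : C := (f v + conjc (f (star v))) / 2.

Lemma cjD (x y : C) : conjc (x + y) = conjc x + conjc y.
Proof. exact: rmorphD. Qed.
Lemma cjM (x y : C) : conjc (x * y) = conjc x * conjc y.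
Proof. exact: rmorphM. Qed.

Lemma conjc_half : conjc ((2 : C)^-1) = 2^-1.
Proof. by rewrite conjc_inv conjc_nat. Qed.

Lemma herm_lin f : clin f -> clin (herm f).
Proof.
case: hs => sK sD sZ sN hf a u w.
rewrite /herm sD sZ !hf !cjD !cjM conjcK; ring.
Qed.

Lemma herm_star f : dual_star star (herm f) = herm f.
Proof.
case: hs => sK sD sZ sN; apply: boolp.funext => v.
rewrite /dual_star /herm sK cjM conjc_half cjD conjcK; ring.
Qed.

Lemma nc_half : nc ((2 : C)^-1) = 2^-1.
Proof.
have -> : (2 : C)^-1 = ((2 : K)^-1)%:C by rewrite fmorphV rmorph_nat.
by rewrite ncR ger0_norm // invr_ge0.
Qed.

Lemma herm_bound f : (forall v, nc (f v) <= nv v) -> forall v, nc (herm f v) <= nv v.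
Proof.
case: hs => sK sD sZ sN hb v.
rewrite /herm ncM nc_half.
have h1 := ncD (f v) (conjc (f (star v))).
rewrite ncJ in h1.
have h2 := hb v; have h3 := hb (star v).
have e : nv (star v) = nv v by rewrite /nv sN.
rewrite e in h3.
have h4 := nc_ge0 (f v + conjc (f (star v))).
have : nc (f v + conjc (f (star v))) * 2^-1 <= (nv v + nv v) * 2^-1.
  by rewrite ler_wpM2r ?invr_ge0 //; lra.
lra.
Qed.

Lemma herm_hermitian f : clin f -> (forall v, nc (f v) <= nv v) ->
  hermitian_functional star (herm f).
Proof.
move=> hl hb; split; last exact: herm_star.
split; first exact: herm_lin.
exists 1 => v; rewrite ncE nvE -rmorphM lecR mul1r; exact: herm_bound.
Qed.

End Herm.

Lemma Re_sum_le (x y : C) : complex.Re (x + 'i * y) <= nc x + nc y.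
Proof.
have := Re_le_nc x; have := Im_le_nc y.
case: x => a b; case: y => c d /= h1 h2.
have := ler_norm (- d); rewrite normrN => h3.
lra.
Qed.


Lemma ncN (z : C) : nc (- z) = nc z.
Proof. by rewrite /nc normrN. Qed.

Lemma nc_mi : nc (- 'i) = 1.
Proof. by rewrite ncN /nc normc_def /= expr0n add0r expr1n sqrtr1. Qed.

Lemma conj_mi : conjc (- 'i : C) = 'i.
Proof. by rewrite /conjc /= oppr0 opprK. Qed.

Lemma le_conv (z : C) (t : K) (v : V) : (`|z| <= t%:C * `|v|) = (nc z <= t * nv v).
Proof. by rewrite ncE nvE -rmorphM lecR. Qed.

Lemma le1_conv (z : C) : (`|z| <= 1) = (nc z <= 1).
Proof. by rewrite ncE -lecR rmorph1. Qed.

Lemma le1_convV (v : V) : (`|v| <= 1) = (nv v <= 1).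
Proof. by rewrite nvE -lecR rmorph1. Qed.

Lemma decomp star f v : f v = herm star f v + 'i * herm star (fun w => - 'i * f w) v.
Proof.
rewrite /herm cjM conj_mi.
set x := f v; set y := conjc (f (star v)).
have -> : 'i * ((- 'i * x + 'i * y) / 2) = (('i * 'i) * (y - x)) / 2 by ring.
rewrite -expr2 sqr_i.
field.
by [].
Qed.


Lemma polar_bound star e y psi v :
  star e = e -> hermitian_functional star y -> y e = 1 -> (forall w, nc (y w) <= nv w) ->
  hermitian_functional star psi -> (forall w, nc (psi w) <= nv w) ->
  polar (Vhe star e `&` @dual_ball K V 2) v -> nc (psi v) <= 3 * (1 + nv e).
Proof.
move=> se yh ye1 yb ph pb hv.
have [[ylin _] ystar] := yh; have [[plin _] pstar] := ph.
have ylin' : clin y by [].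
have plin' : clin psi by [].
have yJ w : conjc (y (star w)) = y w.
  by have := congr1 (fun h => h w) ystar.
have pJ w : conjc (psi (star w)) = psi w.
  by have := congr1 (fun h => h w) pstar.
have pe : conjc (psi e) = psi e by rewrite -{1}se pJ.
have E0 : 0 < 1 + nv e by have := nv_ge0 e; lra.
set c := (1 + nv e)^-1.
have c0 : 0 < c by rewrite invr_gt0.
set f := fun w => y w + c%:C * (psi w - psi e * y w).
have flin : clin f.
  by move=> a u w; rewrite /f ylin plin; ring.
have fb w : nc (f w) <= 2 * nv w.
  rewrite /f.
  have h1 := ncD (y w) (c%:C * (psi w - psi e * y w)).
  rewrite ncM ncR gtr0_norm // in h1.
  have h2 := ncD (psi w) (- (psi e * y w)).
  rewrite ncN ncM in h2.
  have h3 : nc (psi e) * nc (y w) <= nv e * nv w.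
    by apply: ler_pM; rewrite ?nc_ge0.
  have h4 := pb w; have h5 := yb w.
  have h6 : c * nc (psi w - psi e * y w) <= c * (nv w + nv e * nv w).
    by rewrite ler_pM2l //; lra.
  have h7 : c * (nv w + nv e * nv w) = nv w.
    by rewrite -{1}(mul1r (nv w)) -mulrDl mulrA mulVf ?mul1r // gt_eqF.
  lra.
have S2f : (Vhe star e `&` @dual_ball K V 2) f.
  have bf : bounded_functional f.
    by split => //; exists 2 => w; rewrite le_conv; exact: fb.
  split; last by split => // w; rewrite le_conv; exact: fb.
  split; last by rewrite /f ye1 mulr1 subrr mulr0 addr0.
  split => //; apply: boolp.funext => w.
  rewrite /dual_star /f cjD cjM conjc_real.
  have -> : conjc (psi (star w) - psi e * y (star w)) =
            conjc (psi (star w)) - conjc (psi e) * conjc (y (star w)).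
    by rewrite -cjM -rmorphB.
  by rewrite yJ pJ pe.
have S2y : (Vhe star e `&` @dual_ball K V 2) y.
  split; first by split.
  split; first by case: yh.
  move=> w; rewrite le_conv; have := yb w; have := nv_ge0 w; lra.
have hf := hv f S2f; have hy := hv y S2y.
rewrite le1_conv in hf; rewrite le1_conv in hy.
have ev : c%:C * psi v = f v - y v + c%:C * (psi e * y v) by rewrite /f; ring.
have := ncD (f v - y v) (c%:C * (psi e * y v)).
rewrite -ev !ncM ncR gtr0_norm //.
have := ncD (f v) (- y v); rewrite ncN.
have h3 : nc (psi e) * nc (y v) <= nv e * 1.
  by apply: ler_pM; rewrite ?nc_ge0 //.
have h4 : c * (nc (psi e) * nc (y v)) <= c * (nv e * 1).
  by rewrite ler_pM2l.
have h5 : c * nv e <= 1.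
  by rewrite -(mulVf (lt0r_neq0 E0)) ler_pM2l //; lra.
move=> h1 h2.
have h6 : c * nc (psi v) <= 3 by rewrite mulr1 in h4; lra.
have : nc (psi v) = (1 + nv e) * (c * nc (psi v)).
  by rewrite mulrA mulfV ?mul1r // gt_eqF.
move=> ->; rewrite mulrC; apply: ler_wpM2r => //; lra.
Qed.


Lemma main_aux star e : unital_star_normed star e ->
  let S2 := Vhe star e `&` @dual_ball K V 2 in
  exists r R : K, 0 < r /\ 0 < R /\
    scale_set r (polar S2) `<=` @unit_ball K V /\
    @unit_ball K V `<=` scale_set R (polar S2).
Proof.
move=> [hs en0 se [y [[yh ye1] [_ yb']]]] S2.
have yb w : nc (y w) <= nv w by have := yb' w; rewrite le_conv mul1r.
have nvb v : polar S2 v -> nv v <= 6 * (1 + nv e).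
  move=> hv.
  have [g [gl [gb gv]]] := hb_real v.
  set phi := cplx g.
  have phl : clin phi := @cplx_lin g gl.
  have phb := @cplx_bound g gl gb.
  have phb' : forall w, nc (- 'i * phi w) <= nv w by move=> w; rewrite ncM nc_mi mul1r.
  have phl' : clin (fun w => - 'i * phi w) by move=> a u w; rewrite /= phl; ring.
  have h1 := @polar_bound star e y _ v se yh ye1 yb (herm_hermitian star hs _ phl phb) (herm_bound star hs _ phb) hv.
  have h2 := @polar_bound star e y _ v se yh ye1 yb (herm_hermitian star hs _ phl' phb') (herm_bound star hs _ phb') hv.
  have := Re_sum_le (herm star phi v) (herm star (fun w => - 'i * phi w) v).
  rewrite -decomp cplx_Re gv; lra.
set E := 1 + nv e.
have E0 : 0 < E by have := nv_ge0 e; rewrite /E; lra.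
exists (6 * E)^-1, 2; split; first by rewrite invr_gt0 mulr_gt0.
split => //; split.
- move=> _ [v hv <-]; rewrite /unit_ball /= le1_convV nvR gtr0_norm ?invr_gt0 ?mulr_gt0 //.
  have := nvb v hv; rewrite -/E => h.
  by rewrite mulrC ler_pdivrMr ?mulr_gt0 // mul1r.
- move=> v hv; rewrite /unit_ball /= le1_convV in hv.
  exists ((2^-1)%:C *: v).
    move=> f [[[[fl _] _] _] [_ fb]].
    rewrite le1_conv clinZ // ncM ncR ger0_norm ?invr_ge0 //.
    have := fb v; rewrite le_conv => h.
    have h2 : nc (f v) <= 2 by lra.
    lra.
  by rewrite scalerA -rmorphM mulfV ?rmorph1 ?scale1r.
Qed.

End Aux.

Theorem lemma4p2 (K : realType) (V : normedModType K[i]) (star : V -> V) (e : V) :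
  unital_star_normed star e ->
  let S2 := Vhe star e `&` @dual_ball K V 2 in
  exists r R : K, 0 < r /\ 0 < R /\
    scale_set r (polar S2) `<=` @unit_ball K V /\
    @unit_ball K V `<=` scale_set R (polar S2).
Proof. exact: main_aux. Qed.
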